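(* For each $\gamma$ obtained from a Frobenius array $\mu\in\mathcal{F}(\beta)$ as described (which is an $S_\beta$-partition), the array $\pi$ obtained by subtracting $\lfloor\frac{m+2-i}{2}\rfloor$ from each entry in the $i$-th row of $\gamma$ ($1\le i\le m+1$) is an $S_{\beta}$-partition.
   Context: Let $\beta=(b_1,\ldots,b_m)$ be a composition of $d$ and set $r_i=b_1+\cdots+b_i$ ($r_0=0$). The poset $S_\beta$ is $\bigcup_{l=1}^{m}\{(i,j): l\le i\le l+1,\ r_{l-1}+1\le j\le r_l\}$ with $(i_1,j_1)\le(i_2,j_2)$ iff $i_1\le i_2$ and $j_1\le j_2$; it has $m+1$ rows, and with its natural labeling an $S_\beta$-partition is an order-reversing map $S_\beta\to\mathbb{N}$ (nonnegative integers). A Frobenius symbol with $d$ columns is a two-rowed array $\left(\begin{smallmatrix}x_1&\cdots&x_d\\ y_1&\cdots&y_d\end{smallmatrix}\right)$ with $x_1>\cdots>x_d\ge0$, $y_1>\cdots>y_d\ge0$; a column is positive if $x_i-y_i\ge1$ and negative if $x_i-y_i\le0$; parity blocks are maximal sets of contiguous columns of the same parity. Subtracting $d-1,d-2,\ldots,0$ from the entries of columns $1,\ldots,d$ in each row gives a Frobenius array $\mu$ (rows weakly decreasing, parities unchanged). $\mathcal{F}(\beta)$ is the set of Frobenius arrays with $d$ columns and $m$ parity blocks $B_1,\ldots,B_m$, where the last block $B_m$ is positive and $B_i$ has $b_i$ columns. From $\mu\in\mathcal{F}(\beta)$, $\gamma$ is built by interchanging top and bottom entries in each negative block to get $\hat\mu$,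 then placing the $(i,j)$-th entry $\hat\mu_{i,j}$ at position $(i+l,j)$ of $S_\beta$, where $r_l<j\le r_{l+1}$. It is known that $\gamma$ is an $S_\beta$-partition whose columns are weakly decreasing, and strictly decreasing in columns coming from positive blocks of $\mu$. *)

(* Defs.v *)
From mathcomp Require Import all_boot all_order all_algebra.
Set Implicit Arguments. Unset Strict Implicit. Unset Printing Implicit Defensive.
Import Order.TTheory GRing.Theory Num.Theory.

(* A composition beta = (b_1,...,b_m) is a seq of positive naturals; d = sumn beta,
   m = size beta.  Columns are indexed 1..d, rows 1..m+1, blocks 1..m. *)
Definition composition (beta : seq nat) : bool := all (fun b => 0 < b) beta.

Definition rr (beta : seq nat) (l : nat) : nat := sumn (take l beta).

Definition in_block (beta : seq nat) (l j : nat) : bool :=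
  (rr beta l.-1 < j) && (j <= rr beta l).

(* Membership in the poset S_beta (positions (i,j) = (row, column)). *)
Definition inS (beta : seq nat) (p : nat * nat) : Prop :=
  exists l, [/\ 1 <= l <= size beta, l <= p.1 <= l.+1 & in_block beta l p.2].

Definition pos_le (p q : nat * nat) : Prop := p.1 <= q.1 /\ p.2 <= q.2.

(* S_beta-partition: order-reversing map S_beta -> N (values given in int,
   nonnegativity required explicitly). *)
Definition S_partition (beta : seq nat) (f : nat * nat -> int) : Prop :=
  (forall p, inS beta p -> (0 <= f p)%R) /\
  (forall p q, inS beta p -> inS beta q -> pos_le p q -> (f q <= f p)%R).

(* A Frobenius array with d columns: top row x, bottom row y (columns 1..d),
   nonnegative (nat) entries, rows weakly decreasing. *)
Definition frob_array (d : nat) (x y : nat -> nat) : Prop :=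
  forall i j, 1 <= i -> i <= j -> j <= d -> x j <= x i /\ y j <= y i.

Definition pos_col (x y : nat -> nat) (j : nat) : bool := y j < x j.

(* mu in F(beta): parity blocks are exactly B_l = columns r_{l-1}+1..r_l
   (constant parity on each, parity changes between consecutive ones = maximality),
   and the last block B_m is positive. *)
Definition in_F (beta : seq nat) (x y : nat -> nat) : Prop :=
  [/\ frob_array (sumn beta) x y,
      (forall l j j', 1 <= l <= size beta -> in_block beta l j -> in_block beta l j' ->
          pos_col x y j = pos_col x y j'),
      (forall l, 1 <= l < size beta ->
          pos_col x y (rr beta l) != pos_col x y (rr beta l).+1)
    & (0 < size beta -> pos_col x y (sumn beta))].

Definition neg_block (beta : seq nat) (x y : nat -> nat) (l : nat) : bool :=
  all (fun j => ~~ pos_col x y j) (iota (rr beta l.-1).+1 (nth 0 beta l.-1)).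

(* g (as a function row -> column -> value) is the gamma built from mu:
   hat mu swaps top/bottom in negative blocks, and hat mu_{i,j} is placed at
   position (i + l - 1, j) for column j in block l. *)
Definition gamma_of (beta : seq nat) (x y : nat -> nat) (g : nat -> nat -> nat) : Prop :=
  forall l j, 1 <= l <= size beta -> in_block beta l j ->
    g l j = (if neg_block beta x y l then y j else x j) /\
    g l.+1 j = (if neg_block beta x y l then x j else y j).

(* Main.v *)
Require Import Defs.
From mathcomp Require Import all_boot all_order all_algebra.
From mathcomp Require Import zify.
Import Order.TTheory GRing.Theory Num.Theory.

Lemma rr_mono (s : seq nat) l l' : l <= l' -> rr s l <= rr s l'.
Proof.
rewrite /rr; elim: s l l' => [|a s IH] [|l] [|l'] //= H.
by rewrite leq_add2l; apply: IH.
Qed.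

Lemma rr_le_sum (s : seq nat) l : rr s l <= sumn s.
Proof.
rewrite /rr; elim: s l => [|a s IH] [|l] //=; by rewrite leq_add2l.
Qed.

Lemma rr_size (s : seq nat) : rr s (size s) = sumn s.
Proof. by rewrite /rr take_size. Qed.

Lemma rr_succ (s : seq nat) l : l < size s -> rr s l.+1 = rr s l + nth 0 s l.
Proof.
rewrite /rr; elim: s l => [|a s IH] [|l] //=.
- by rewrite take0 /= !addn0.
- by move=> H; rewrite IH // addnA.
Qed.

Lemma rr_lt (s : seq nat) l : composition s -> l < size s -> rr s l < rr s l.+1.
Proof.
move=> Hc Hl; rewrite rr_succ // -{1}(addn0 (rr s l)) ltn_add2l.
by move/allP: Hc; apply; apply: mem_nth.
Qed.

Section Main.
Variables (beta : seq nat) (x y : nat -> nat) (g : nat -> nat -> nat).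
Hypothesis Hc : composition beta.
Hypothesis HF : in_F beta x y.
Hypothesis HG : gamma_of beta x y g.

Let m := size beta.
Let d := sumn beta.

Lemma parity_block k : forall l j, l + k = m -> 1 <= l ->
  in_block beta l j -> pos_col x y j = ~~ odd (m - l).
Proof.
case: HF => Hfr Hconst Halt Hlast.
elim: k => [|k IH] l j Hk Hl Hb.
- rewrite addn0 in Hk; subst l.
  have Hd : in_block beta m d.
    rewrite /in_block -/m /d -rr_size leqnn andbT.
    have := @rr_lt beta m.-1 Hc. rewrite prednK //; apply; lia.
  rewrite subnn /= (Hconst m j d) //; last by apply/andP; split.
  by apply: Hlast; lia.
- have Hlm : l < m by lia.
  have Hb1 : in_block beta l (rr beta l).
    rewrite /in_block leqnn andbT.
    have := @rr_lt beta l.-1 Hc. rewrite prednK //; apply; lia.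
  have Hb2 : in_block beta l.+1 (rr beta l).+1.
    rewrite /in_block /= ltnSn /=. exact: rr_lt.
  have := IH l.+1 _ (ltac:(lia)) (ltac:(lia)) Hb2 => E.
  have := Halt l (ltac:(lia)). rewrite E (Hconst l j (rr beta l)) //; last lia.
  have -> : m - l = (m - l.+1).+1 by lia.
  by rewrite oddS; case: (odd _); case: pos_col.
Qed.

Lemma parity {l j} : 1 <= l <= m -> in_block beta l j -> pos_col x y j = ~~ odd (m - l).
Proof. move=> /andP[H1 H2]; apply: (@parity_block (m - l)) => //; lia. Qed.

Lemma negb_eq {l j} : 1 <= l <= m -> in_block beta l j -> neg_block beta x y l = ~~ pos_col x y j.
Proof.
case: HF => Hfr Hconst Halt Hlast.
move=> Hl Hb.
have Hmem : forall k, (k \in iota (rr beta l.-1).+1 (nth 0 beta l.-1)) = in_block beta l k.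
  move=> k; rewrite mem_iota /in_block.
  have := @rr_succ beta l.-1. rewrite prednK; last lia. move=> -> ; last lia.
  apply/idP/idP => /andP[A B]; apply/andP; split; lia.
rewrite /neg_block. case E: (pos_col x y j) => /=.
- apply/negP => /allP H. have := H j. rewrite Hmem Hb E => /(_ isT). done.
- apply/allP => k; rewrite Hmem => Hk. by rewrite (Hconst l k j) // E.
Qed.

Definition F (i j : nat) : int :=
  ((if odd (m.+1 - i) then x j else y j)%:Z - ((m + 2 - i) %/ 2)%:Z)%R.

Lemma G_eq i j : inS beta (i, j) ->
  g i j = if odd (m.+1 - i) then x j else y j.
Proof.
case=> l [Hl /= Hi Hb].
have [Hg1 Hg2] := HG l j Hl Hb.
have [->|->] : i = l \/ i = l.+1 by lia.
- rewrite Hg1 (negb_eq Hl Hb) (parity Hl Hb) negbK.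
  have -> : m.+1 - l = (m - l).+1 by lia.
  by rewrite oddS; case: (odd _).
- by rewrite Hg2 (negb_eq Hl Hb) (parity Hl Hb) negbK subSS.
Qed.

Lemma Hmono i j j' : 1 <= j -> j <= j' -> j' <= d -> (F i j' <= F i j)%R.
Proof.
case: HF => Hfr _ _ _ => H1 H2 H3.
have [A B] := Hfr j j' H1 H2 H3.
rewrite /F; case: (odd _); rewrite lerD2r lez_nat //.
Qed.

Lemma Vmono {l j} : 1 <= l <= m -> in_block beta l j -> (F l.+1 j <= F l j)%R.
Proof.
move=> Hl Hb; have P := parity Hl Hb.
move: P; rewrite /pos_col /F subSS.
have -> : m.+1 - l = (m - l).+1 by lia.
have -> : m + 2 - l.+1 = (m - l).+1 by lia.
have -> : m + 2 - l = (m - l).+2 by lia.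
rewrite oddS.
have e := odd_double_half (m - l).
case O: (odd (m - l)) => /= P; rewrite -!divn2 in e *.
- have -> : (m - l).+2 %/ 2 = (m - l).+1 %/ 2 by lia.
  rewrite lerD2r lez_nat; lia.
- have -> : (m - l).+2 %/ 2 = ((m - l).+1 %/ 2).+1 by lia.
  lia.
Qed.

Lemma main_order n : forall i1 j1 i2 j2, inS beta (i1, j1) -> inS beta (i2, j2) ->
  i1 <= i2 -> j1 <= j2 -> i2 - i1 = n -> (F i2 j2 <= F i1 j1)%R.
Proof.
elim: n => [|n IH] i1 j1 i2 j2 [l1 [Hl1 /= Hi1 Hb1]] [l2 [Hl2 /= Hi2 Hb2]] Hi Hj Hn.
- have -> : i2 = i1 by lia.
  apply: Hmono => //.
  + move: Hb1; rewrite /in_block; lia.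
  + apply: leq_trans (rr_le_sum beta l2). move: Hb2; rewrite /in_block; lia.
- have HS2 : inS beta (i2, j2) by exists l2.
  have [E|E] : i1 = l1 \/ i1 = l1.+1 by lia.
  + subst i1. apply: le_trans (Vmono Hl1 Hb1).
    apply: IH => //; try lia; by exists l1; split => //=; lia.
  + subst i1.
    have Hl1m : l1 < m by move: Hl2 => /andP[_ ?]; lia.
    set j' := (rr beta l1).+1.
    have Hb' : in_block beta l1.+1 j'.
      by rewrite /in_block /= /j' ltnSn /=; exact: rr_lt.
    have Hl' : 1 <= l1.+1 <= m by lia.
    have Hj1 : j1 <= rr beta l1 by move: Hb1; rewrite /in_block; lia.
    have Hj2 : j' <= j2.
      have := @rr_mono beta l1 l2.-1 (ltac:(lia)). move: Hb2; rewrite /in_block /j'; lia.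
    apply: (@le_trans _ _ (F l1.+1 j')); last apply: Hmono.
    2: by move: Hb1; rewrite /in_block; lia.
    2: by rewrite /j'; lia.
    2: by apply: leq_trans (rr_le_sum beta l1.+1); move: Hb'; rewrite /in_block; lia.
    apply: le_trans (Vmono Hl' Hb').
    apply: IH => //; try lia; by exists l1.+1; split => //=; lia.
Qed.

End Main.

Theorem lemma4p4 (beta : seq nat) (x y : nat -> nat) (g : nat -> nat -> nat) :
  composition beta -> in_F beta x y -> gamma_of beta x y g ->
  S_partition beta
    (fun p => ((g p.1 p.2)%:Z - ((size beta + 2 - p.1) %/ 2)%:Z)%R).
Proof.
move=> Hc HF HG.
have Eq : forall p, inS beta p ->
   ((g p.1 p.2)%:Z - ((size beta + 2 - p.1) %/ 2)%:Z)%R = F beta x y p.1 p.2.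
  by case=> i j Hp; rewrite /F (G_eq _ _ _ _ Hc HF HG _ _ Hp).
split.
- case=> i j Hp; rewrite Eq //=.
  have Hm : 1 <= size beta by case: Hp => l [/andP[A B] _ _]; lia.
  have Htop : inS beta ((size beta).+1, sumn beta).
    exists (size beta); split => //=; first by rewrite Hm leqnn.
    - by rewrite leqnn leqnSn.
    - rewrite /in_block -rr_size leqnn andbT.
      have := @rr_lt beta (size beta).-1 Hc. rewrite prednK //; apply; lia.
  apply: le_trans (main_order _ _ _ Hc HF _ _ _ _ _ Hp Htop _ _ erefl).
  + rewrite /F subnn /=; have -> : size beta + 2 - (size beta).+1 = 1 by lia.
    by rewrite divn_small // subr0.
  + case: Hp => l [/andP[A B] /= C _]; lia.
  + case: Hp => l [_ _ /= D]. apply: leq_trans (rr_le_sum beta l). move: D; rewrite /in_block; lia.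
- move=> p q Hp Hq [H1 H2]. rewrite !Eq //.
  case: p q Hp Hq H1 H2 => [i1 j1] [i2 j2] Hp Hq H1 H2.
  exact: (main_order _ _ _ Hc HF _ _ _ _ _ Hp Hq H1 H2 erefl).
Qed.
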